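(* Let $b>0$, $\Delta>0$, $\sigma_\theta^2>0$ be real numbers and define $$E_1(a)=\begin{cases}\dfrac{b-\sqrt{\tfrac{b^2-\Delta a+\sqrt{(b^2-\Delta a)^2+\sigma_\theta^2a^2}}{2}}}{a}, & a\neq0,\\[1ex] \dfrac{\Delta}{2b}, & a=0,\end{cases}$$ and $\bar a=\frac{4b^2\Delta}{\sigma_\theta^2}$. Then $E_1(a)>0$ if and only if $a<\bar a$, and on the region $a<\bar a$ the function $E_1$ has a unique maximizer $a^\dagger$. Moreover, $a^\dagger>0$ iff $\sigma_\theta^2<\Delta^2$, $a^\dagger=0$ iff $\sigma_\theta^2=\Delta^2$, and $a^\dagger<0$ iff $\sigma_\theta^2>\Delta^2$. Finally, $a^\dagger<\frac{2b^2\Delta}{\Delta^2+\sigma_\theta^2}<\bar a$.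
   Context: $E_1(a)$ is the expected effort in the affine symmetric Bayesian equilibrium of the cubic contest, where $\Delta=c-E[\theta]$ and $\sigma_\theta^2$ is the type variance. *)

(* Defs.v *)
From Stdlib Require Import Reals Lra.
Open Scope R_scope.

Definition E1_eff (b Dl s2 a : R) : R :=
  if Req_EM_T a 0 then Dl / (2 * b)
  else (b - sqrt ((b ^ 2 - Dl * a + sqrt ((b ^ 2 - Dl * a) ^ 2 + s2 * a ^ 2)) / 2)) / a.

Definition abar_thr (b Dl s2 : R) : R := 4 * b ^ 2 * Dl / s2.

(* Main.v *)
Require Import Defs.
From Stdlib Require Import Reals Lra Psatz Lia.
Open Scope R_scope.

Definition Qf (b Dl s a : R) := sqrt ((b ^ 2 - Dl * a + sqrt ((b ^ 2 - Dl * a) ^ 2 + s * a ^ 2)) / 2).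

Lemma E_eq b Dl s a : a <> 0 -> E1_eff b Dl s a = (b - Qf b Dl s a) / a.
Proof. intros H. unfold E1_eff, Qf. destruct (Req_EM_T a 0); [contradiction|reflexivity]. Qed.

Lemma E_0 b Dl s : E1_eff b Dl s 0 = Dl / (2*b).
Proof. unfold E1_eff. destruct (Req_EM_T 0 0); [reflexivity|contradiction]. Qed.

Lemma Qfacts b Dl s a : 0 < s -> a <> 0 ->
  0 < Qf b Dl s a /\ Qf b Dl s a ^ 2 - (b^2 - Dl*a) > 0 /\
  Qf b Dl s a ^ 2 * (Qf b Dl s a ^ 2 - (b^2 - Dl*a)) = s * a^2 / 4.
Proof.
  intros hs ha. unfold Qf. set (x := b^2 - Dl*a).
  assert (hsa : 0 < s * a^2) by (assert (a*a>0) by (destruct (Rlt_or_le a 0); nra); nra).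
  assert (h0 : 0 <= x^2 + s*a^2) by nra.
  set (S := sqrt (x^2 + s*a^2)).
  assert (hS0 : 0 <= S) by apply sqrt_pos.
  assert (hS2 : S * S = x^2 + s*a^2) by (apply sqrt_sqrt; auto).
  assert (hSx : S > x /\ S > - x) by (split; nra).
  assert (hp : 0 < (x + S)/2) by lra.
  assert (hQ2 : sqrt ((x+S)/2) * sqrt ((x+S)/2) = (x+S)/2) by (apply sqrt_sqrt; lra).
  assert (hQ : 0 < sqrt ((x+S)/2)) by (apply sqrt_lt_R0; lra).
  split; [exact hQ|]. simpl. rewrite Rmult_1_r, hQ2. split; nra.
Qed.

Lemma sq_sign (y Q x s a : R) : Q^2 * (Q^2 - x) = s*a^2/4 ->
  (y - Q^2) * (y + Q^2 - x) = y^2 - x*y - s*a^2/4.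
Proof. intros H. rewrite <- H. ring. Qed.

Lemma key_id b Dl u a : 0 < Dl -> 0 < b + u -> 0 < b^2 + b*u - u^2 ->
  let c := b^2 + b*u - u^2 in let d := b + u in
  let e := Dl*d/(2*c) in let al := 2*c*u/(Dl*d) in let r := 4*b^2*c/(Dl*d^2) in
  let s := Dl^2*(b-u)^3*d/c^2 in
  ((b - e*a)^2)^2 - (b^2 - Dl*a)*(b-e*a)^2 - s*a^2/4 = a*e^4*(a-al)^2*(a-r).
Proof. intros hD hd hc c d e al r s. unfold e, al, r, s, c, d. field. lra. Qed.
Lemma getu b Dl s : 0 < b -> 0 < Dl -> 0 < s ->
  exists u, 0 < b + u /\ u < b /\ 0 < b^2 + b*u - u^2 /\
   s * (b^2 + b*u - u^2)^2 = Dl^2 * (b-u)^3 * (b+u).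
Proof.
  intros hb hD hs.
  set (f := fun u => s * (b^2 + b*u - u^2)^2 - Dl^2 * (b-u)^3 * (b+u)).
  assert (h5 : sqrt 5 * sqrt 5 = 5) by (apply sqrt_sqrt; lra).
  assert (h5a : 2 < sqrt 5).
  { rewrite <- (sqrt_pow2 2) by lra. apply sqrt_lt_1_alt; lra. }
  assert (h5b : sqrt 5 < 3).
  { rewrite <- (sqrt_pow2 3) by lra. apply sqrt_lt_1_alt; lra. }
  set (u0 := b * (1 - sqrt 5)/2).
  assert (hc0 : b^2 + b*u0 - u0^2 = 0) by (unfold u0; nra).
  assert (hcont : continuity f) by (unfold f; reg).
  assert (hf0 : f u0 < 0).
  { unfold f. rewrite hc0. assert (0 < b - u0) by (unfold u0; nra).
    assert (0 < b + u0) by (unfold u0; nra).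
    assert (0 < (b-u0)^3) by (apply pow_lt; lra). 
    assert (0 < Dl^2) by (apply pow_lt; lra). 
    assert (0 < Dl^2 * (b-u0)^3 * (b+u0)) by (apply Rmult_lt_0_compat; [apply Rmult_lt_0_compat|]; lra).
    lra. }
  assert (hfb : 0 < f b).
  { unfold f. replace (b^2 + b*b - b^2) with (b^2) by ring.
    replace (b - b) with 0 by ring. assert (0 < b^2) by (apply pow_lt; lra).
    assert (0 < (b^2)^2) by (apply pow_lt; lra). simpl; nra. }
  assert (hlt : u0 < b) by (unfold u0; nra).
  destruct (IVT f u0 b hcont hlt hf0 hfb) as [u [[h1 h2] hu]].
  assert (hne0 : u <> u0) by (intro E; subst u; lra).
  assert (hneb : u <> b) by (intro E; subst u; lra).
  exists u.
  assert (hcu : b^2 + b*u - u^2 = (u - u0) * (b * (1 + sqrt 5)/2 - u)) by (unfold u0; nra).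
  split; [unfold u0 in *; nra|]. split; [lra|]. split.
  - rewrite hcu. apply Rmult_lt_0_compat; nra.
  - unfold f in hu. lra.
Qed.

Lemma key_id2 b Dl s u a : 0 < Dl -> 0 < b + u -> 0 < b^2 + b*u - u^2 ->
  s * (b^2 + b*u - u^2)^2 = Dl^2 * (b-u)^3 * (b+u) ->
  let c := b^2 + b*u - u^2 in let d := b + u in
  let e := Dl*d/(2*c) in let al := 2*c*u/(Dl*d) in let r := 4*b^2*c/(Dl*d^2) in
  ((b - e*a)^2)^2 - (b^2 - Dl*a)*(b-e*a)^2 - s*a^2/4 = a*e^4*(a-al)^2*(a-r).
Proof.
  intros hD hd hc hs c d e al r.
  assert (s = Dl^2*(b-u)^3*d/c^2) by (unfold c, d; field_simplify_eq; [lra| lra]).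
  subst s. apply key_id; auto.
Qed.

Theorem theorem6 (b Dl s2 : R) (hb : 0 < b) (hD : 0 < Dl) (hs : 0 < s2) :
  (forall a : R, 0 < E1_eff b Dl s2 a <-> a < abar_thr b Dl s2) /\
  exists adag : R,
    adag < abar_thr b Dl s2 /\
    (forall a : R, a < abar_thr b Dl s2 -> E1_eff b Dl s2 a <= E1_eff b Dl s2 adag) /\
    (forall a : R, a < abar_thr b Dl s2 ->
       (forall a' : R, a' < abar_thr b Dl s2 -> E1_eff b Dl s2 a' <= E1_eff b Dl s2 a) -> a = adag) /\
    (0 < adag <-> s2 < Dl ^ 2) /\
    (adag = 0 <-> s2 = Dl ^ 2) /\
    (adag < 0 <-> s2 > Dl ^ 2) /\
    adag < 2 * b ^ 2 * Dl / (Dl ^ 2 + s2) /\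
    2 * b ^ 2 * Dl / (Dl ^ 2 + s2) < abar_thr b Dl s2.
Proof.
  set (abar := abar_thr b Dl s2).
  assert (habar : abar * s2 = 4 * b^2 * Dl) by (unfold abar, abar_thr; field; lra).
  assert (hb2 : 0 < b^2) by (apply pow_lt; lra).
  assert (Eform : forall a, a <> 0 -> exists Q t, E1_eff b Dl s2 a = t /\ b - Q = t * a /\
      0 < Q /\ Q^2 - (b^2 - Dl*a) > 0 /\ Q^2 * (Q^2 - (b^2 - Dl*a)) = s2 * a^2/4).
  { intros a ha. destruct (Qfacts b Dl s2 a hs ha) as [h1 [h2 h3]].
    exists (Qf b Dl s2 a), (E1_eff b Dl s2 a). split; [reflexivity|].
    rewrite E_eq by auto. split; [field; auto| auto]. }
  split.
  { intros a. destruct (Req_dec a 0) as [->|ha].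
    - rewrite E_0. split; intros _.
      + nra.
      + apply Rdiv_lt_0_compat; lra.
    - destruct (Eform a ha) as [Q [t [-> [h1 [h2 [h3 h4]]]]]].
      pose proof (sq_sign (b^2) Q (b^2 - Dl*a) s2 a h4) as hp.
      assert (hK : t * ((b+Q)*(b^2 + Q^2 - (b^2 - Dl*a))) = b^2*Dl - s2*a/4).
      { apply (Rmult_eq_reg_l a); [|auto].
        replace (b^2 - Q^2) with ((b-Q)*(b+Q)) in hp by ring. rewrite h1 in hp.
        transitivity ((t * a * (b + Q)) * (b ^ 2 + Q ^ 2 - (b ^ 2 - Dl * a))); [ring|].
        rewrite hp. field. }
      assert (0 < (b+Q)*(b^2 + Q^2 - (b^2 - Dl*a))) by (apply Rmult_lt_0_compat; lra).
      split; intro HH; nra. }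
  destruct (getu b Dl s2 hb hD hs) as [u [hd [hub [hc hsu]]]].
  set (c := b^2 + b*u - u^2) in *. set (d := b + u) in *.
  set (e := Dl*d/(2*c)). set (al := 2*c*u/(Dl*d)). set (r := 4*b^2*c/(Dl*d^2)).
  assert (he : 0 < e) by (unfold e; apply Rdiv_lt_0_compat; nra).
  assert (heal : e * al = u) by (unfold e, al; field; lra).
  assert (her : e * r = 2*b^2/d) by (unfold e, r; field; lra).
  assert (hr : b < e * r).
  { rewrite her. apply (Rmult_lt_reg_r d); [lra|].
    replace (2*b^2/d*d) with (2*b^2) by (field; lra). unfold d in *. nra. }
  assert (hrp : 0 < r) by nra.
  assert (hid : forall a, ((b - e*a)^2)^2 - (b^2 - Dl*a)*(b-e*a)^2 - s2*a^2/4 = a*e^4*(a-al)^2*(a-r))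
    by (intro a; apply key_id2; auto).
  assert (he4 : 0 < e^4) by (apply pow_lt; lra).
  assert (Eal : E1_eff b Dl s2 al = e).
  { destruct (Req_dec u 0) as [hu0|hu0].
    - assert (al = 0) by (unfold al; rewrite hu0; field; lra).
      rewrite H, E_0. unfold e, d, c. rewrite hu0. field. lra.
    - assert (hal : al <> 0) by (intro H; rewrite H in heal; lra).
      destruct (Eform al hal) as [Q [t [-> [h1 [h2 [h3 h4]]]]]].
      pose proof (sq_sign ((b - e*al)^2) Q (b^2 - Dl*al) s2 al h4) as hp.
      rewrite hid in hp. replace (al - al) with 0 in hp by ring.
      rewrite heal in hp.
      assert (hy : (b-u)^2 = Q^2).
      { assert (0 < (b-u)^2 + Q^2 - (b^2 - Dl*al)) by nra. 
        assert (((b-u)^2 - Q^2) = 0); [|lra].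
        apply (Rmult_eq_reg_r ((b - u) ^ 2 + Q ^ 2 - (b ^ 2 - Dl * al))); [|lra].
        rewrite hp. field. }
      assert (Q = b - u) by nra.
      apply (Rmult_eq_reg_r al); [|auto]. rewrite <- h1. nra. }
  assert (Kge : forall a, e <= E1_eff b Dl s2 a -> a = al).
  { intros a Ha. destruct (Req_dec a 0) as [ha0|ha0].
    - subst a. rewrite E_0 in Ha. unfold e in Ha.
      assert (Dl*d*(2*b) <= Dl*(2*c)).
      { apply Rmult_le_reg_r with (/(2*c*(2*b))). apply Rinv_0_lt_compat; nra.
        replace (Dl*d*(2*b)*/(2*c*(2*b))) with (Dl*d/(2*c)) by (field; lra).
        replace (Dl*(2*c)*/(2*c*(2*b))) with (Dl/(2*b)) by (field; lra). lra. }
      assert (Dl*d*(2*b) - Dl*(2*c) = 2*Dl*u^2) by (unfold c, d; ring).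
      assert (u^2 <= 0) by nra.
      assert (hu0 : u = 0) by nra.
      unfold al. rewrite hu0. field. lra.
    - destruct (Eform a ha0) as [Q [t [Ht [h1 [h2 [h3 h4]]]]]]. rewrite Ht in Ha.
      pose proof (sq_sign ((b - e*a)^2) Q (b^2 - Dl*a) s2 a h4) as hp.
      rewrite hid in hp.
      assert (hsq : 0 <= (a - al)^2) by apply pow2_ge_0.
      set (y := (b - e*a)^2) in *.
      assert (hy0 : 0 <= y) by (unfold y; apply pow2_ge_0).
      assert (hW : 0 < y + Q^2 - (b^2 - Dl*a)) by lra.
      destruct (Rlt_or_le 0 a) as [hpos|hneg].
      + assert (hQ : Q <= b - e*a) by nra.
        assert (hy : 0 < b - e*a) by lra.
        assert (hQ2 : Q^2 <= y) by (unfold y; nra).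
        assert (hL : 0 <= (y - Q ^ 2) * (y + Q ^ 2 - (b ^ 2 - Dl * a))) by
          (apply Rmult_le_pos; lra).
        assert (har : a < r) by nra.
        assert (hP : 0 < a*e^4*(r-a)) by (apply Rmult_lt_0_compat; [apply Rmult_lt_0_compat|]; lra).
        assert (hM : (a*e^4*(r-a)) * (a-al)^2 <= 0).
        { replace ((a*e^4*(r-a)) * (a-al)^2) with (- (a * e ^ 4 * (a - al) ^ 2 * (a - r))) by ring.
          lra. }
        assert (hz : (a-al)^2 <= 0) by nra.
        assert (hz2 : (a-al)^2 = 0) by lra.
        assert (hz3 : (a-al)*(a-al) = 0) by (rewrite <- hz2; ring). apply Rmult_integral in hz3; lra.
      + assert (hneg' : a < 0) by lra.
        assert (hQ : b - e*a <= Q) by nra.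
        assert (hy : 0 < b - e*a) by nra.
        assert (hQ2 : y <= Q^2) by (unfold y; nra).
        assert (hL : (y - Q ^ 2) * (y + Q ^ 2 - (b ^ 2 - Dl * a)) <= 0) by nra.
        assert (hP : 0 < (-a)*e^4*(r-a)) by (apply Rmult_lt_0_compat; [apply Rmult_lt_0_compat|]; lra).
        assert (hM : ((-a)*e^4*(r-a)) * (a-al)^2 <= 0).
        { replace (((-a)*e^4*(r-a)) * (a-al)^2) with (a * e ^ 4 * (a - al) ^ 2 * (a - r)) by ring.
          lra. }
        assert (hz : (a-al)^2 <= 0) by nra.
        assert (hz2 : (a-al)^2 = 0) by lra.
        assert (hz3 : (a-al)*(a-al) = 0) by (rewrite <- hz2; ring). apply Rmult_integral in hz3; lra. }
  assert (hmax : forall a, E1_eff b Dl s2 a <= e).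
  { intro a. destruct (Rle_or_lt (E1_eff b Dl s2 a) e) as [h|h]; [exact h|].
    assert (a = al) by (apply Kge; lra). subst a. lra. }
  set (M := 2 * b ^ 2 * Dl / (Dl ^ 2 + s2)).
  assert (hDs : 0 < Dl^2 + s2) by (assert (0 < Dl^2) by (apply pow_lt; lra); lra).
  assert (hMK : M*(Dl^2+s2) = 2*b^2*Dl) by (unfold M; field; lra).
  assert (hMa : M < abar).
  { assert (hdf : (abar - M)*(s2*(Dl^2+s2)) = 2*b^2*Dl*(2*Dl^2+s2)).
    { replace ((abar - M)*(s2*(Dl^2+s2))) with ((abar*s2)*(Dl^2+s2) - (M*(Dl^2+s2))*s2) by ring.
      rewrite habar, hMK. ring. }
    assert (0 < 2*b^2*Dl*(2*Dl^2+s2)).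
    { apply Rmult_lt_0_compat; [|nra]. nra. }
    assert (0 < s2*(Dl^2+s2)) by nra. nra. }
  assert (halsgn : al*(Dl*d) = 2*c*u) by (unfold al; field; lra).
  assert (hS : (Dl^2+s2)*c^2 = Dl^2*b^2*(2*b^2-u^2)).
  { replace ((Dl^2+s2)*c^2) with (Dl^2*c^2 + s2*c^2) by ring. rewrite hsu. unfold c, d. ring. }
  assert (hdiff : (M - al)*(Dl*d*((Dl^2+s2)*c^2)) = 2*b^5*Dl^2*c).
  { replace ((M - al)*(Dl*d*((Dl^2+s2)*c^2))) with
      (M*(Dl^2+s2)*(Dl*d*c^2) - (al*(Dl*d))*((Dl^2+s2)*c^2)) by ring.
    rewrite hMK, halsgn, hS. unfold c, d. ring. }
  assert (hbound : al < M).
  { assert (hK : 0 < Dl*d*((Dl^2+s2)*c^2)).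
    { apply Rmult_lt_0_compat; [nra|]. apply Rmult_lt_0_compat; [lra|]. nra. }
    assert (0 < 2*b^5*Dl^2*c).
    { assert (0 < b^5) by (apply pow_lt; lra). assert (0 < Dl^2) by (apply pow_lt; lra).
      apply Rmult_lt_0_compat; [|lra]. nra. }
    nra. }
  set (g := 2*(b-u)*c + b^2*(2*b-u)).
  assert (hg : 0 < g) by (unfold g; nra).
  assert (hsg : (Dl^2 - s2)*c^2 = Dl^2*u*g).
  { replace ((Dl^2 - s2)*c^2) with (Dl^2*c^2 - s2*c^2) by ring. rewrite hsu. unfold g, c, d. ring. }
  assert (hc2 : 0 < c^2) by (apply pow_lt; lra).
  assert (hDl2 : 0 < Dl^2) by (apply pow_lt; lra).
  assert (hDd : 0 < Dl*d) by nra.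
  exists al.
  assert (halb : al < abar) by lra.
  split; [exact halb|].
  split; [intros a _; rewrite Eal; apply hmax|].
  split; [intros a _ H; apply Kge; rewrite <- Eal; apply H; exact halb|].
  assert (hsig : (0 < u /\ 0 < al /\ s2 < Dl^2) \/ (u = 0 /\ al = 0 /\ s2 = Dl^2) \/
                 (u < 0 /\ al < 0 /\ s2 > Dl^2)).
  { destruct (Rtotal_order u 0) as [hu|[hu|hu]].
    - right; right. split; [exact hu|]. split.
      + assert (2*c*u < 0) by nra. nra.
      + assert (Dl^2*u*g < 0) by (assert (0 < Dl^2 * g) by nra; nra). nra.
    - right; left. split; [exact hu|]. split.
      + assert (2*c*u = 0) by (rewrite hu; ring). nra.
      + assert (Dl^2*u*g = 0) by (rewrite hu; ring). nra.
    - left. split; [exact hu|]. split.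
      + assert (0 < 2*c*u) by nra. nra.
      + assert (0 < Dl^2*u*g) by (assert (0 < Dl^2 * g) by nra; nra). nra. }
  split; [lra|]. split; [lra|]. split; [lra|]. split; [exact hbound| exact hMa].
Qed.
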